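(* Let $(u_S,u_R)$ be an environment satisfying scant-indifferences. If commitment has no value, then there exist a partitional messaging strategy $\hat\sigma$ and a pure action strategy $\hat\rho$ such that $(\hat\sigma,\hat\rho)$ is a cheap-talk equilibrium, $U_S(\hat\sigma,\hat\rho)$ equals the persuasion payoff, and $|M_{\hat\sigma}|\le|A|$.
   Context: $A=\{a_1,\dots,a_{|A|}\}$ and $\Omega$ are finite nonempty sets, $\mu_0$ a prior on $\Omega$ with $\mu_0(\omega)>0$ for all $\omega$, and $M$ a finite message set with $|M|>\max\{|\Omega|,|A|\}$. An environment is a pair of functions $u_S,u_R:A\times\Omega\to[0,1]$. A messaging strategy is $\sigma:\Omega\to\Delta M$; an action strategy is $\rho:M\to\Delta A$; $\rho$ is pure if every $\rho(\cdot|m)$ is degenerate. $U_i(\sigma,\rho)=\sum_{\omega,m,a}\mu_0(\omega)\sigma(m|\omega)\rho(a|m)u_i(a,\omega)$. $(\sigma,\rho)$ is S-BR if $\sigma\in\arg\max_{\sigma'}U_S(\sigma',\rho)$, R-BR if $\rho\in\arg\max_{\rho'}U_R(\sigma,\rho')$; a cheap-talk equilibrium is S-BR and R-BR. The persuasion payoff is the maximum of $U_S$ over R-BR profiles; the cheap-talk payoff is the maximum of $U_S$ over cheap-talk equilibria; commitment has no value if these are equal. $\sigma$ is partitional if for every $\omega$ some $m$ has $\sigma(m|\omega)=1$. $M_\sigma=\{m:\sigma(m|\omega)>0\text{ for some }\omega\}$. Scant-indifferences: for each $a\in A$ let $\mathbf u_S(a)=u_S(a,\cdot)\in\mathbb R^{|\Omega|}$,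 $\mathbf u_R(a)=u_R(a,\cdot)$. For each $i$, the expanded-indifference matrix $T^i$ has $|\Omega|$ columns and rows: $\mathbf u_S(a_j)-\mathbf u_S(a_i)$ for each $j\ne i$, then $\mathbf u_R(a_j)-\mathbf u_R(a_i)$ for each $j\ne i$, then the rows of the $|\Omega|\times|\Omega|$ identity matrix. A row-submatrix of $T^i$ is a matrix obtained by deleting some rows. The environment satisfies scant-indifferences if for every $i$ every row-submatrix of $T^i$ has full rank. *)

(* Defs.v *)
From HB Require Import structures.
From mathcomp Require Import all_boot all_order all_algebra.
From mathcomp Require Import boolp classical_sets reals.

Set Implicit Arguments.
Unset Strict Implicit.
Unset Printing Implicit Defensive.

Import Order.TTheory GRing.Theory Num.Theory.
Local Open Scope ring_scope.
Local Open Scope classical_set_scope.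

Definition is_dist (R : realType) (T : finType) (p : T -> R) : Prop :=
  (forall t, 0 <= p t) /\ \sum_(t : T) p t = 1.

(* Messaging strategy sigma : Omega -> Delta M, written sigma w m = sigma(m|w). *)
Definition msg_strat (R : realType) (Om M : finType) (sigma : Om -> M -> R) : Prop :=
  forall w, is_dist (sigma w).

(* Action strategy rho : M -> Delta A, written rho m a = rho(a|m). *)
Definition act_strat (R : realType) (M A : finType) (rho : M -> A -> R) : Prop :=
  forall m, is_dist (rho m).

Definition pure_strat (R : realType) (M A : finType) (rho : M -> A -> R) : Prop :=
  forall m, exists a, forall a', rho m a' = (a' == a)%:R.

Definition partitional (R : realType) (Om M : finType) (sigma : Om -> M -> R) : Prop :=
  forall w, exists m, sigma w m = 1.

Definition used_msgs (R : realType) (Om M : finType) (sigma : Om -> M -> R) : {set M} :=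
  [set m | [exists w, 0 < sigma w m]].

Definition U (R : realType) (A Om M : finType) (mu0 : Om -> R) (u : A -> Om -> R)
  (sigma : Om -> M -> R) (rho : M -> A -> R) : R :=
  \sum_(w : Om) \sum_(m : M) \sum_(a : A) mu0 w * sigma w m * rho m a * u a w.

Definition S_BR (R : realType) (A Om M : finType) (mu0 : Om -> R) (uS : A -> Om -> R)
  (sigma : Om -> M -> R) (rho : M -> A -> R) : Prop :=
  [/\ msg_strat sigma, act_strat rho &
      forall sigma' : Om -> M -> R, msg_strat sigma' ->
        U mu0 uS sigma' rho <= U mu0 uS sigma rho].

Definition R_BR (R : realType) (A Om M : finType) (mu0 : Om -> R) (uR : A -> Om -> R)
  (sigma : Om -> M -> R) (rho : M -> A -> R) : Prop :=
  [/\ msg_strat sigma, act_strat rho &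
      forall rho' : M -> A -> R, act_strat rho' ->
        U mu0 uR sigma rho' <= U mu0 uR sigma rho].

Definition cheap_talk_eq (R : realType) (A Om M : finType) (mu0 : Om -> R)
  (uS uR : A -> Om -> R) (sigma : Om -> M -> R) (rho : M -> A -> R) : Prop :=
  S_BR mu0 uS sigma rho /\ R_BR mu0 uR sigma rho.

(* Persuasion payoff: the maximum (= supremum, which is attained) of U_S over
   R-BR profiles, with message set M. *)
Definition persuasion_payoff (R : realType) (A Om M : finType) (mu0 : Om -> R)
  (uS uR : A -> Om -> R) : R :=
  sup [set x : R | exists (sigma : Om -> M -> R) (rho : M -> A -> R),
                     R_BR mu0 uR sigma rho /\ x = U mu0 uS sigma rho].

Definition cheap_talk_payoff (R : realType) (A Om M : finType) (mu0 : Om -> R)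
  (uS uR : A -> Om -> R) : R :=
  sup [set x : R | exists (sigma : Om -> M -> R) (rho : M -> A -> R),
                     cheap_talk_eq mu0 uS uR sigma rho /\ x = U mu0 uS sigma rho].

(* Rows of the expanded-indifference matrix T^i, indexed by
   inl (j, false) : u_S(a_j) - u_S(a_i)   (j <> i)
   inl (j, true)  : u_R(a_j) - u_R(a_i)   (j <> i)
   inr w          : the identity row e_w. *)
Definition T_entry (R : realType) (A Om : finType) (uS uR : A -> Om -> R) (i : A)
  (r : (A * bool) + Om) (w' : Om) : R :=
  match r with
  | inl (j, false) => uS j w' - uS i w'
  | inl (j, true) => uR j w' - uR i w'
  | inr w => (w == w')%:R
  end.

Definition T_rows (A Om : finType) (i : A) : {set (A * bool) + Om} :=
  [set r | match r with inl (j, _) => j != i | inr _ => true end].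

Definition T_sub (R : realType) (A Om : finType) (uS uR : A -> Om -> R) (i : A)
  (X : {set (A * bool) + Om}) : 'M[R]_(#|X|, #|Om|) :=
  \matrix_(k < #|X|, l < #|Om|) T_entry uS uR i (enum_val k) (enum_val l).

Definition scant_indifferences (R : realType) (A Om : finType)
  (uS uR : A -> Om -> R) : Prop :=
  forall (i : A) (X : {set (A * bool) + Om}), X \subset T_rows Om i ->
    \rank (T_sub uS uR i X) = minn #|X| #|Om|.

(* Main.v *)
Require Import Defs.
From HB Require Import structures.
From mathcomp Require Import all_boot all_order all_algebra.
From mathcomp Require Import boolp classical_sets reals.
From mathcomp Require Import ring lra.

Import Order.TTheory GRing.Theory Num.Theory.
Local Open Scope ring_scope.

Set Implicit Arguments.
Unset Strict Implicit.
Unset Printing Implicit Defensive.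


Section Basics.
Variable R : realType.

Definition pert (T : finType) (p : T -> R) (x y : T) : T -> R :=
  fun t => p t + (t == y)%:R * p x - (t == x)%:R * p x.

Lemma sum_ind (T : finType) (y : T) (c : R) : \sum_t (t == y)%:R * c = c.
Proof.
rewrite (bigD1 y) //= eqxx mul1r big1 ?addr0 // => t /negbTE ->; by rewrite mul0r.
Qed.

Lemma pert_dist (T : finType) (p : T -> R) x y : is_dist p -> is_dist (pert p x y).
Proof.
move=> [p0 p1]; split.
  move=> t; rewrite /pert; have [e|ne] := eqVneq t x.
    rewrite e mul1r; case: (x == y); rewrite ?mul1r ?mul0r; last by rewrite addr0 subrr.
    by rewrite addrK.
  by rewrite mul0r subr0 addr_ge0 // mulr_ge0.
rewrite /pert sumrB big_split /= !sum_ind p1; ring.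
Qed.

Lemma pert_sum (T : finType) (p : T -> R) x y (g : T -> R) :
  \sum_t pert p x y t * g t = \sum_t p t * g t + p x * (g y - g x).
Proof.
rewrite /pert.
have -> : \sum_t (p t + (t == y)%:R * p x - (t == x)%:R * p x) * g t =
  \sum_t (p t * g t + ((t == y)%:R * (p x * g y) - (t == x)%:R * (p x * g x))).
  apply: eq_bigr => t _; case: (eqVneq t y) => [ety|nty]; case: (eqVneq t x) => [etx|ntx];
  rewrite /= ?mul1r ?mul0r; try subst; ring.
by rewrite big_split /= sumrB !sum_ind; ring.
Qed.

Lemma dist_pos (T : finType) (p : T -> R) : is_dist p -> exists t, 0 < p t.
Proof.
move=> [p0 p1]; apply/not_existsP => h.
have : \sum_t p t = 0 by apply: big1 => t _; apply/eqP; rewrite eq_le p0 andbT leNgt; apply/negP => /(h t).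
by rewrite p1 => /eqP; rewrite oner_eq0.
Qed.

Lemma dist_le1 (T : finType) (p : T -> R) t : is_dist p -> p t <= 1.
Proof.
move=> [p0 <-]; rewrite (bigD1 t) //= lerDl sumr_ge0 //.
Qed.

End Basics.

Section Game.
Variables (R : realType) (A Om M : finType) (mu0 : Om -> R) (uS uR : A -> Om -> R).

Definition dot (x y : Om -> R) := \sum_w x w * y w.
Definition qv (sigma : Om -> M -> R) (m : M) : Om -> R := fun w => mu0 w * sigma w m.
Definition mval (rho : M -> A -> R) (u : A -> Om -> R) (m : M) (w : Om) :=
  \sum_a rho m a * u a w.

Lemma U_eq1 (u : A -> Om -> R) (sigma : Om -> M -> R) (rho : M -> A -> R) :
  U mu0 u sigma rho = \sum_w mu0 w * \sum_m sigma w m * mval rho u m w.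
Proof.
apply: eq_bigr => w _; rewrite mulr_sumr; apply: eq_bigr => m _.
rewrite /mval !mulr_sumr; apply: eq_bigr => a _; ring.
Qed.

Lemma U_eq2 (u : A -> Om -> R) (sigma : Om -> M -> R) (rho : M -> A -> R) :
  U mu0 u sigma rho = \sum_m \sum_a rho m a * dot (qv sigma m) (u a).
Proof.
rewrite /U exchange_big; apply: eq_bigr => m _.
rewrite exchange_big; apply: eq_bigr => a _.
rewrite /dot /qv mulr_sumr; apply: eq_bigr => w _; ring.
Qed.

Lemma dotZ (k : R) x y : dot (fun w => k * x w) y = k * dot x y.
Proof. by rewrite /dot mulr_sumr; apply: eq_bigr => w _; rewrite mulrA. Qed.

Lemma sum_upd (T : finType) (F : T -> R) (t0 : T) (X : R) :
  \sum_t (if t == t0 then X else F t) = \sum_t F t + (X - F t0).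
Proof.
rewrite (bigD1 t0) //= eqxx [in RHS](bigD1 t0) //=.
rewrite (eq_bigr F); first by ring.
by move=> t /negbTE ->.
Qed.

Lemma RBR_supp (sigma : Om -> M -> R) (rho : M -> A -> R) m a :
  R_BR mu0 uR sigma rho -> 0 < rho m a ->
  forall c, dot (qv sigma m) (uR c) <= dot (qv sigma m) (uR a).
Proof.
move=> [hs hr hbr] hpos c.
pose rho' m' := if m' == m then pert (rho m) a c else rho m'.
have hr' : act_strat rho'.
  by move=> m'; rewrite /rho'; case: eqP => _; [apply: pert_dist|].
have := hbr rho' hr'; rewrite !U_eq2.
have -> : \sum_m0 \sum_a0 rho' m0 a0 * dot (qv sigma m0) (uR a0) =
  \sum_m0 (if m0 == m then \sum_a0 pert (rho m) a c a0 * dot (qv sigma m) (uR a0)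
           else \sum_a0 rho m0 a0 * dot (qv sigma m0) (uR a0)).
  by apply: eq_bigr => m0 _; rewrite /rho'; case: eqP => [->|].
rewrite sum_upd pert_sum.
set K := \sum_a0 rho m a0 * _.
move=> h.
have : rho m a * (dot (qv sigma m) (uR c) - dot (qv sigma m) (uR a)) <= 0 by lra.
by rewrite pmulr_rle0 // subr_le0.
Qed.

Lemma SBR_supp (sigma : Om -> M -> R) (rho : M -> A -> R) w m :
  (forall w, 0 < mu0 w) ->
  S_BR mu0 uS sigma rho -> 0 < sigma w m ->
  forall m', mval rho uS m' w <= mval rho uS m w.
Proof.
move=> hmu [hs hr hbr] hpos m'.
pose sigma' w' := if w' == w then pert (sigma w) m m' else sigma w'.
have hs' : msg_strat sigma'.
  by move=> w0; rewrite /sigma'; case: eqP => _; [apply: pert_dist|].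
have := hbr sigma' hs'; rewrite !U_eq1.
have -> : \sum_w0 mu0 w0 * \sum_m0 sigma' w0 m0 * mval rho uS m0 w0 =
  \sum_w0 (if w0 == w then mu0 w * \sum_m0 pert (sigma w) m m' m0 * mval rho uS m0 w
           else mu0 w0 * \sum_m0 sigma w0 m0 * mval rho uS m0 w0).
  by apply: eq_bigr => w0 _; rewrite /sigma'; case: eqP => [->|].
rewrite sum_upd pert_sum.
move=> h.
have : (mu0 w * sigma w m) * (mval rho uS m' w - mval rho uS m w) <= 0 by lra.
by rewrite pmulr_rle0 ?mulr_gt0 // subr_le0.
Qed.

Lemma SO_RBR (sigma : Om -> M -> R) (rho : M -> A -> R) :
  msg_strat sigma -> act_strat rho ->
  (forall m a, 0 < rho m a -> forall c, dot (qv sigma m) (uR c) <= dot (qv sigma m) (uR a)) ->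
  R_BR mu0 uR sigma rho.
Proof.
move=> hs hr hso; split => // rho' hr'; rewrite !U_eq2; apply: ler_sum => m _.
have [a ha] := dist_pos (hr m).
set d := fun c => dot (qv sigma m) (uR c).
have -> : \sum_a0 rho m a0 * d a0 = d a.
  have -> : \sum_a0 rho m a0 * d a0 = \sum_a0 rho m a0 * d a.
    apply: eq_bigr => c _; have := (hr m).1 c; rewrite le_eqVlt => /orP[/eqP <-|hc].
      by rewrite !mul0r.
    congr (_ * _); apply/eqP; rewrite eq_le hso //= hso //.
  by rewrite -mulr_suml (hr m).2 mul1r.
apply: (@le_trans _ _ (\sum_a0 rho' m a0 * d a)).
  by apply: ler_sum => c _; rewrite ler_wpM2l // ?(hr' m).1 // hso.
by rewrite -mulr_suml (hr' m).2 mul1r.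
Qed.

End Game.


Section OB.
Variables (R : realType) (A Om M : finType) (mu0 : Om -> R) (uS uR : A -> Om -> R).
Variable a0 : A.
Hypothesis hAM : (#|A| <= #|M|)%N.
Hypothesis hmu : forall w, 0 < mu0 w.
Variable V : R.
Hypothesis UB : forall (sigma : Om -> M -> R) (rho : M -> A -> R),
  R_BR mu0 uR sigma rho -> U mu0 uS sigma rho <= V.

Lemma part_sum (J T : finType) (f : J -> T) (F : J -> R) :
  \sum_t \sum_(j | f j == t) F j = \sum_j F j.
Proof.
under eq_bigr do rewrite big_mkcond.
rewrite exchange_big; apply: eq_bigr => j _ /=.
rewrite -big_mkcond /=.
under eq_bigl do rewrite eq_sym.
by rewrite big_pred1_eq.
Qed.

Definition emb (a : A) : M := enum_val (widen_ord hAM (enum_rank a)).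

Lemma emb_inj : injective emb.
Proof.
move=> x y /enum_val_inj /(congr1 val) /= /val_inj /enum_rank_inj //.
Qed.

Definition einv (m : M) : A := odflt a0 [pick a | emb a == m].

Lemma einvK a : einv (emb a) = a.
Proof.
rewrite /einv; case: pickP => [b /eqP /emb_inj //|/(_ a)]; by rewrite eqxx.
Qed.

Lemma OBfam (J : finType) (qf : J -> Om -> R) (act : J -> A) :
  (forall j w, 0 <= qf j w) -> (forall w, \sum_j qf j w = mu0 w) ->
  (forall j c, dot (qf j) (uR c) <= dot (qf j) (uR (act j))) ->
  \sum_j dot (qf j) (uS (act j)) <= V.
Proof.
move=> q0 qsum qob.
pose S m w := \sum_(j | emb (act j) == m) qf j w.
pose sigma w m := S m w / mu0 w.
pose rho m c := (c == einv m)%:R : R.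
have hq : forall m, qv mu0 sigma m = S m.
  move=> m; apply: funext => w; rewrite /qv /sigma mulrC divfK //.
  by rewrite gt_eqF.
have hs : msg_strat sigma.
  move=> w; split.
    move=> m; apply: divr_ge0; [apply: sumr_ge0 => j _; exact: q0 | exact: ltW].
  rewrite /sigma -mulr_suml /S.
  rewrite part_sum qsum divff //.
  by rewrite gt_eqF.
have hr : act_strat rho.
  move=> m; split; first by move=> c; rewrite /rho ler0n.
  by rewrite /rho (bigD1 (einv m)) //= eqxx big1 ?addr0 // => c /negbTE ->.
have hdotS : forall m (y : Om -> R), dot (S m) y = \sum_(j | emb (act j) == m) dot (qf j) y.
  move=> m y; rewrite /dot /S exchange_big /=; apply: eq_bigr => w _.
  by rewrite mulr_suml.
have hrb : R_BR mu0 uR sigma rho.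
  apply: SO_RBR => // m a; rewrite /rho; case: eqP => [-> _ c|]; last by rewrite ltxx.
  rewrite hq !hdotS; apply: ler_sum => j /eqP hj.
  by rewrite -hj einvK.
have := UB hrb; rewrite U_eq2.
have -> : \sum_m \sum_a rho m a * dot (qv mu0 sigma m) (uS a) =
          \sum_m \sum_(j | emb (act j) == m) dot (qf j) (uS (act j)).
  apply: eq_bigr => m _.
  rewrite (bigD1 (einv m)) //= big1 => [|c /negbTE hc]; last by rewrite /rho hc mul0r.
  rewrite /rho eqxx mul1r addr0 hq hdotS; apply: eq_bigr => j /eqP <-.
  by rewrite einvK.
by rewrite part_sum.
Qed.

End OB.


Section LA.
Variables (R : realType) (A Om : finType) (uS uR : A -> Om -> R).
Hypothesis hscant : scant_indifferences uS uR.

Lemma sum_enum_val (F : Om -> R) : \sum_(l < #|Om|) F (enum_val l) = \sum_w F w.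
Proof. by rewrite -(big_enum_val (A := Om)). Qed.

Lemma kernel_lem (i : A) (X : {set (A * bool) + Om}) (x : Om -> R) :
  X \subset T_rows Om i -> (exists w, x w != 0) ->
  (forall r, r \in X -> \sum_w T_entry uS uR i r w * x w = 0) ->
  (#|X| < #|Om|)%N.
Proof.
move=> sub [w0 nz] orth; have rk := hscant sub.
rewrite ltnNge; apply/negP => le.
have rk' : \rank (T_sub uS uR i X) = #|Om| by rewrite rk; apply/minn_idPr.
pose xc : 'cV[R]_#|Om| := \col_l x (enum_val l).
have h0 : T_sub uS uR i X *m xc = 0.
  apply/matrixP => k j; rewrite !mxE.
  under eq_bigr do rewrite !mxE.
  rewrite (sum_enum_val (fun w => T_entry uS uR i (enum_val k) w * x w)).
  exact/orth/enum_valP.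
have hf : row_free (T_sub uS uR i X)^T by rewrite /row_free mxrank_tr rk'.
have : xc^T *m (T_sub uS uR i X)^T == 0 by rewrite -trmx_mul h0 trmx0.
rewrite mulmx_free_eq0 // => /eqP /matrixP /(_ 0 (enum_rank w0)).
by rewrite !mxE enum_rankK => hx; rewrite hx eqxx in nz.
Qed.

Lemma solve_lem (i : A) (X : {set (A * bool) + Om}) (tf : (A * bool) + Om -> R) :
  X \subset T_rows Om i -> (#|X| <= #|Om|)%N ->
  exists d : Om -> R, forall r, r \in X -> \sum_w T_entry uS uR i r w * d w = tf r.
Proof.
move=> sub le; have rk := hscant sub.
have rk' : \rank (T_sub uS uR i X) = #|X| by rewrite rk; apply/minn_idPl.
have hf : row_full (T_sub uS uR i X)^T by rewrite /row_full mxrank_tr rk'.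
pose tc : 'rV[R]_#|X| := \row_k tf (enum_val k).
have /submxP [D hD] : (tc <= (T_sub uS uR i X)^T)%MS by apply: submx_full.
exists (fun w => D 0 (enum_rank w)) => r hr.
move/matrixP: hD => /(_ 0 (enum_rank_in hr r)); rewrite !mxE.
rewrite (enum_rankK_in hr hr) => ->.
rewrite -(sum_enum_val (fun w => T_entry uS uR i r w * D 0 (enum_rank w))).
apply: eq_bigr => l _; rewrite !mxE enum_valK (enum_rankK_in hr hr) mulrC //.
Qed.


Lemma sum_delta (F : Om -> R) w : \sum_w' F w' * (w' == w)%:R = F w.
Proof.
rewrite (bigD1 w) //= eqxx mulr1 big1 ?addr0 // => w' /negbTE ->; by rewrite mulr0.
Qed.

Lemma strict_pref (a b : A) (w : Om) : a != b -> uS a w != uS b w.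
Proof.
move=> ab; apply/negP => /eqP e.
pose X : {set (A * bool) + Om} := inl (b, false) |: [set (inr w' : (A * bool) + Om) | w' in [set~ w]].
have sub : X \subset T_rows Om a.
  apply/fintype.subsetP => r; rewrite !inE => /orP[/eqP ->|/imsetP [w' _ ->]] //.
  by rewrite eq_sym.
have hk : (#|X| < #|Om|)%N.
  apply: (@kernel_lem a X (fun w' => (w' == w)%:R) sub).
    by exists w; rewrite eqxx oner_eq0.
  move=> r; rewrite !inE => /orP[/eqP ->|/imsetP [w' hw' ->]] /=.
    by rewrite sum_delta e subrr.
  rewrite (sum_delta (fun w0 => (w' == w0)%:R)).
  by move: hw'; rewrite !inE => /negbTE ->.
have hO : (0 < #|Om|)%N by apply/card_gt0P; exists w.
move: hk; rewrite /X cardsU1 card_imset; last by move=> x y [].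
rewrite cardsC1.
have -> : inl (b, false) \notin [set (inr w' : (A * bool) + Om) | w' in [set~ w]].
  by apply/imsetP => -[].
by rewrite add1n prednK // ltnn.
Qed.

End LA.


Lemma pair_sum (R : realType) (I J : finType) (F : I -> J -> R) :
  \sum_(p : I * J) F p.1 p.2 = \sum_i \sum_j F i j.
Proof. by rewrite pair_big. Qed.


Section DotH.
Variables (R : realType) (Om : finType).

Lemma dot_diff (x y z : Om -> R) :
  \sum_w (x w - y w) * z w = dot z x - dot z y.
Proof.
rewrite /dot -sumrB; apply: eq_bigr => w _; ring.
Qed.

Lemma dot_m (x y g : Om -> R) (e : R) :
  dot (fun w => x w / 2 - e * y w) g = dot x g / 2 - e * dot y g.
Proof.
rewrite /dot mulr_suml mulr_sumr -sumrB; apply: eq_bigr => w _; ring.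
Qed.

Lemma dot_p (x y g : Om -> R) (e : R) :
  dot (fun w => x w / 2 + e * y w) g = dot x g / 2 + e * dot y g.
Proof.
rewrite /dot mulr_suml mulr_sumr -big_split; apply: eq_bigr => w _ /=; ring.
Qed.

Lemma dot0 (g : Om -> R) : dot (fun _ => 0) g = 0.
Proof. by rewrite /dot big1 // => w _; rewrite mul0r. Qed.

Lemma dot_bound (d g : Om -> R) : (forall w, `|g w| <= 1) ->
  `|dot d g| <= 1 + \sum_w `|d w|.
Proof.
move=> hg; apply: (le_trans (ler_norm_sum _ _ _)).
apply: (@le_trans _ _ (\sum_w `|d w|)); last by rewrite lerDr.
apply: ler_sum => w _; rewrite normrM.
by rewrite -{2}(mulr1 `|d w|) ler_wpM2l.
Qed.

End DotH.

Lemma pos_lb (R : realType) (I : finType) (P : pred I) (f : I -> R) :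
  (forall i, P i -> 0 < f i) -> exists g : R, 0 < g /\ forall i, P i -> g <= f i.
Proof.
move=> hf.
suff : forall s : seq I, exists g : R, 0 < g /\ forall i, i \in s -> P i -> g <= f i.
  by case/(_ (enum I)) => g [g0 hg]; exists g; split => // i; apply: hg; rewrite mem_enum.
elim => [|x s [g [g0 hg]]]; first by exists 1; split.
case hx: (P x).
  exists (Num.min g (f x)); split; first by rewrite lt_min g0 hf.
  move=> i; rewrite in_cons => /orP[/eqP ->|his] hi; first by rewrite ge_min lexx orbT.
  by rewrite ge_min hg.
exists g; split => // i; rewrite in_cons => /orP[/eqP ->|his] hi; first by rewrite hx in hi.
exact: hg.
Qed.

Section Steps.
Variables (R : realType) (A Om M : finType) (mu0 : Om -> R) (uS uR : A -> Om -> R).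
Variable a0 : A.
Hypothesis hAM : (#|A| <= #|M|)%N.
Hypothesis hmu : forall w, 0 < mu0 w.
Hypothesis huS : forall a w, 0 <= uS a w <= 1.
Hypothesis huR : forall a w, 0 <= uR a w <= 1.
Hypothesis hscant : scant_indifferences uS uR.
Variable V : R.
Hypothesis UB : forall (sigma : Om -> M -> R) (rho : M -> A -> R),
  R_BR mu0 uR sigma rho -> U mu0 uS sigma rho <= V.
Variables (sigma : Om -> M -> R) (rho : M -> A -> R).
Hypothesis hCT : cheap_talk_eq mu0 uS uR sigma rho.
Hypothesis hV : U mu0 uS sigma rho = V.

Let hs : msg_strat sigma. Proof. by case: hCT => [[]]. Qed.
Let hr : act_strat rho. Proof. by case: hCT => [[]]. Qed.
Let hRBR : R_BR mu0 uR sigma rho. Proof. by case: hCT. Qed.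
Let hSBR : S_BR mu0 uS sigma rho. Proof. by case: hCT. Qed.

Let q := qv mu0 sigma.

Lemma step1_le m a b : 0 < rho m a -> 0 < rho m b ->
  dot (q m) (uS b) <= dot (q m) (uS a).
Proof.
move=> ha hb; rewrite leNgt; apply/negP => hlt.
pose qf (p : M * A) w := rho p.1 p.2 * q p.1 w.
pose act (p : M * A) := if p == (m, a) then b else p.2.
have q0 : forall m' w, 0 <= q m' w.
  by move=> m' w; apply: mulr_ge0; [exact: ltW | exact: (hs w).1].
have hOB : \sum_j dot (qf j) (uS (act j)) <= V.
  apply: (OBfam a0 hAM hmu UB (J := (M * A)%type) (qf := qf) (act := act)).
- by move=> p w; apply: mulr_ge0; [exact: (hr p.1).1 | exact: q0].
- move=> w; rewrite /qf (pair_sum (fun m' c => rho m' c * q m' w)).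
  under eq_bigr do rewrite -mulr_suml (hr _).2 mul1r.
  by rewrite /q /qv -mulr_sumr (hs w).2 mulr1.
- move=> [m' c] d; rewrite /qf /= !dotZ.
  have [hc0|hc0] := eqVneq (rho m' c) 0; first by rewrite hc0 !mul0r.
  have hc : 0 < rho m' c by rewrite lt_def hc0 (hr m').1.
  rewrite ler_pM2l //; rewrite /act.
  case: eqP => [[-> _]|_] /=; first exact: RBR_supp hRBR hb d.
  exact: RBR_supp hRBR hc d.
move: hOB.
have -> : \sum_j dot (qf j) (uS (act j)) =
  \sum_(p : M * A) (if p == (m, a) then rho m a * dot (q m) (uS b)
                    else rho p.1 p.2 * dot (q p.1) (uS p.2)).
  apply: eq_bigr => p _; rewrite /qf /act dotZ; case: eqP => [-> //|//].
rewrite sum_upd (pair_sum (fun m' c => rho m' c * dot (q m') (uS c))) /= -U_eq2 hV.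
move=> h.
have : rho m a * (dot (q m) (uS b) - dot (q m) (uS a)) <= 0 by lra.
by rewrite pmulr_rle0 // subr_le0 leNgt hlt.
Qed.

Lemma step1 m a b : 0 < rho m a -> 0 < rho m b ->
  dot (q m) (uS a) = dot (q m) (uS b).
Proof. by move=> ha hb; apply/eqP; rewrite eq_le !step1_le. Qed.


Definition alpha (m : M) : A := odflt a0 [pick c | 0 < rho m c].

Lemma alpha_pos m : 0 < rho m (alpha m).
Proof.
rewrite /alpha; case: pickP => [c //|h].
by have [c hc] := dist_pos (hr m); move: (h c); rewrite hc.
Qed.

Lemma supp_eq m c : rho m c * dot (q m) (uS c) = rho m c * dot (q m) (uS (alpha m)).
Proof.
have [hc0|hc0] := eqVneq (rho m c) 0; first by rewrite hc0 !mul0r.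
have hc : 0 < rho m c by rewrite lt_def hc0 (hr m).1.
by rewrite (step1 hc (alpha_pos m)).
Qed.

Lemma pay : V = \sum_m dot (q m) (uS (alpha m)).
Proof.
rewrite -hV U_eq2; apply: eq_bigr => m _.
under eq_bigr do rewrite supp_eq.
by rewrite -mulr_suml (hr m).2 mul1r.
Qed.

Lemma step2 m a b : (exists w, 0 < sigma w m) -> 0 < rho m a -> 0 < rho m b -> a = b.
Proof.
move=> [w1 hw1] ha hb; apply/eqP; apply/negPn/negP => hab.
pose d c := dot (q m) (uR c).
have dopt : forall c, d c <= d a := RBR_supp hRBR ha.
have dba : d b = d a by apply/eqP; rewrite eq_le dopt (RBR_supp hRBR hb a).
have qpos : forall w, 0 <= q m w.
  by move=> w; apply: mulr_ge0; [exact: ltW | exact: (hs w).1].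
pose S := [set w | 0 < sigma w m].
have qS0 : forall w, w \notin S -> q m w = 0.
  move=> w; rewrite inE => hw; rewrite /q /qv.
  have -> : sigma w m = 0 by apply/eqP; rewrite eq_le (hs w).1 andbT leNgt.
  by rewrite mulr0.
pose Bset := [set c | d c == d a].
pose X : {set (A * bool) + Om} :=
  [set (inl (c, true) : (A * bool) + Om) | c in Bset :\ a] :|:
  [set (inl (b, false) : (A * bool) + Om)] :|:
  [set (inr w : (A * bool) + Om) | w in ~: S].
have sub : X \subset T_rows Om a.
  apply/fintype.subsetP => r; rewrite !inE => /orP[/orP[|]|].
  - by case/imsetP => c; rewrite !inE => /andP[hca _] ->.
  - by move/eqP ->; rewrite eq_sym.
  - by case/imsetP => w _ ->.
have orth : forall r, r \in X -> \sum_w T_entry uS uR a r w * q m w = 0.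
  move=> r; rewrite !inE => /orP[/orP[|]|].
  - case/imsetP => c; rewrite !inE => /andP[_ /eqP hc] -> /=.
    by rewrite dot_diff -/(d c) -/(d a) hc subrr.
  - move/eqP -> => /=; rewrite dot_diff (step1 ha hb) subrr //.
  - case/imsetP => w hw -> /=.
    rewrite (eq_bigr (fun w' => q m w' * (w' == w)%:R)); last first.
      by move=> w' _; rewrite eq_sym mulrC.
    by rewrite sum_delta qS0 //; move: hw; rewrite !inE.
have hk : (#|X| < #|Om|)%N.
  apply: (kernel_lem hscant sub (x := q m)) => //.
  exists w1; rewrite /q /qv mulf_neq0 // gt_eqF //.
have [del hdel] := solve_lem hscant
  (fun r => match r with inl (c, _) => (c == b)%:R | inr _ => 0 end) sub (ltnW hk).
have bB : b \in Bset by rewrite inE dba.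
have hdR : forall c, c \in Bset -> c != a -> dot del (uR c) - dot del (uR a) = (c == b)%:R.
  move=> c hc hca; rewrite -dot_diff.
  apply: (hdel (inl (c, true))); rewrite !inE; apply/orP; left; apply/orP; left.
  by apply/imsetP; exists c; rewrite // in_setD1 hca hc.
have hdS : dot del (uS b) - dot del (uS a) = 1.
  rewrite -dot_diff.
  have := hdel (inl (b, false)); rewrite /= eqxx; apply.
  by rewrite !inE eqxx orbT.
have hd0 : forall w, w \notin S -> del w = 0.
  move=> w hw; rewrite -(sum_delta (fun w' => del w') w).
  rewrite (eq_bigr (fun w' => T_entry uS uR a (inr w) w' * del w')); last first.
    by move=> w' _; rewrite /= eq_sym mulrC.
  apply: (hdel (inr w)); rewrite !inE; apply/orP; right.
  by apply/imsetP; exists w => //; rewrite inE.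
pose Dd := 1 + \sum_w `|del w|.
have Dd0 : 0 < Dd by rewrite /Dd ltr_pwDl // sumr_ge0.
have hbd : forall c c', `|dot del (uR c) - dot del (uR c')| <= Dd.
  move=> c c'; rewrite -dot_diff.
  under eq_bigr do rewrite mulrC.
  apply: dot_bound => w; rewrite ler_norml.
  by have := huR c w; have := huR c' w; lra.
have [g [g0 [hgS hgB]]] : exists g : R, 0 < g /\
    (forall w, w \in S -> g <= q m w) /\ (forall c, c \notin Bset -> g <= d a - d c).
  pose P (i : Om + A) := match i with inl w => w \in S | inr c => c \notin Bset end.
  pose f (i : Om + A) := match i with inl w => q m w | inr c => d a - d c end.
  have hP : forall i, P i -> 0 < f i.
    case => [w|c] /=.
      by rewrite inE => hw; rewrite /q /qv mulr_gt0.
    by rewrite inE subr_gt0 lt_neqAle dopt andbT.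
  have [g [g0 hg]] := pos_lb hP.
  exists g; split => //; split => [w|c] h; [exact: (hg (inl w)) | exact: (hg (inr c))].
pose eps := g / (2 * Dd).
have eps0 : 0 < eps by rewrite /eps divr_gt0 // mulr_gt0.
have epsD : eps * Dd = g / 2.
  by rewrite /eps; field; rewrite gt_eqF.
have delD : forall w, `|del w| <= Dd.
  move=> w; rewrite /Dd (bigD1 w) //=.
  have : 0 <= \sum_(i | i != w) `|del i| by apply: sumr_ge0.
  lra.
have hsmall : forall w, `|eps * del w| <= q m w / 2.
  move=> w; case: (boolP (w \in S)) => hw.
    rewrite normrM (gtr0_norm eps0).
    have := ler_wpM2l (ltW eps0) (delD w); rewrite epsD => h.
    apply: (le_trans h); have := hgS w hw; lra.
  by rewrite hd0 // qS0 // mulr0 normr0 mul0r.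
pose q1 w := q m w / 2 - eps * del w.
pose q2 w := q m w / 2 + eps * del w.
pose qf (j : M + bool) : Om -> R :=
  match j with inl m' => if m' == m then (fun _ => 0) else q m'
             | inr false => q1 | inr true => q2 end.
pose act (j : M + bool) : A :=
  match j with inl m' => alpha m' | inr false => a | inr true => b end.
have hxB : forall c, c \in Bset -> c != a -> dot del (uR a) <= dot del (uR c).
  move=> c hc hca; have := hdR c hc hca; case: (c == b) => /= h; lra.
have hxB2 : forall c, c \in Bset -> dot del (uR c) <= dot del (uR b).
  move=> c hc; have hba : b != a by rewrite eq_sym.
  have hb1 := hdR b bB hba; rewrite eqxx /= in hb1.
  case: (eqVneq c a) => [->|hca]; first lra.
  have := hdR c hc hca; case: (c == b) => /= h; lra.
have hOB : \sum_j dot (qf j) (uS (act j)) <= V.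
  apply: (OBfam a0 hAM hmu UB (J := (M + bool)%type) (qf := qf) (act := act)).
  - case => [m'|[]] w /=.
    + case: eqP => _ /=; first exact: lexx.
      by apply: mulr_ge0; [exact: ltW | exact: (hs w).1].
    + by have := hsmall w; rewrite ler_norml /q2; lra.
    + by have := hsmall w; rewrite ler_norml /q1; lra.
  - move=> w; rewrite big_sumType /= big_bool /=.
    rewrite (eq_bigr (fun m' => if m' == m then 0 else q m' w)); last first.
      by move=> m' _; case: eqP.
    rewrite sum_upd /q2 /q1.
    have -> : \sum_m' q m' w = mu0 w by rewrite /q /qv -mulr_sumr (hs w).2 mulr1.
    lra.
  - case => [m'|[]] c /=.
    + case: eqP => _; first by rewrite !dot0.
      exact: RBR_supp hRBR (alpha_pos m') c.
    + rewrite !dot_p -/(d c) -/(d b) dba.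
      case: (boolP (c \in Bset)) => hc.
        have -> : d c = d a by move: hc; rewrite inE => /eqP.
        by rewrite lerD2l; apply: ler_wpM2l; [exact: ltW | exact: hxB2].
      have := hgB c hc; have := hbd c b; rewrite ler_norml => /andP[_ h1].
      have := ler_wpM2l (ltW eps0) h1; rewrite epsD mulrBr; lra.
    + rewrite !dot_m -/(d c) -/(d a).
      case: (boolP (c \in Bset)) => hc.
        have -> : d c = d a by move: hc; rewrite inE => /eqP.
        rewrite lerD2l lerN2; apply: ler_wpM2l; first exact: ltW.
        by case: (eqVneq c a) => [->|hca]; [exact: lexx|exact: hxB].
      have := hgB c hc; have := hbd a c; rewrite ler_norml => /andP[_ h1].
      have := ler_wpM2l (ltW eps0) h1; rewrite epsD mulrBr; lra.
move: hOB; rewrite big_sumType /= big_bool /=.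
rewrite (eq_bigr (fun m' => if m' == m then 0 else dot (q m') (uS (alpha m')))); last first.
  by move=> m' _; case: eqP => _ //; rewrite dot0.
rewrite sum_upd -pay /q2 /q1 dot_p dot_m.
rewrite -(step1 ha hb) (step1 (alpha_pos m) ha).
have : eps * dot del (uS b) - eps * dot del (uS a) = eps by rewrite -mulrBr hdS mulr1.
lra.
Qed.



Variable w0 : Om.

Definition mw (w : Om) : M := odflt (emb hAM a0) [pick m | 0 < sigma w m].

Lemma mw_pos w : 0 < sigma w (mw w).
Proof.
rewrite /mw; case: pickP => [m //|h].
by have [m hm] := dist_pos (hs w); move: (h m); rewrite hm.
Qed.

Definition fS (w : Om) : A := alpha (mw w).

Lemma pure_used w m : 0 < sigma w m -> forall c, rho m c = (c == alpha m)%:R.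
Proof.
move=> hw.
have h0 : forall c, c != alpha m -> rho m c = 0.
  move=> c hc; apply/eqP; rewrite eq_le (hr m).1 andbT leNgt; apply/negP => hpos.
  by move: hc; rewrite (step2 (ex_intro _ w hw) hpos (alpha_pos m)) eqxx.
move=> c; case: eqP => [->|/eqP hc]; last by rewrite h0.
have := (hr m).2; rewrite (bigD1 (alpha m)) //= big1 ?addr0 // => c' hc'.
Qed.

Lemma val_used w m w' : 0 < sigma w m -> mval rho uS m w' = uS (alpha m) w'.
Proof.
move=> hw; rewrite /mval.
under eq_bigr do rewrite (pure_used hw).
rewrite (bigD1 (alpha m)) //= eqxx mul1r big1 ?addr0 // => c /negbTE ->.
by rewrite mul0r.
Qed.

Lemma f_cons w m : 0 < sigma w m -> alpha m = fS w.
Proof.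
move=> hw; apply/eqP; apply/negPn/negP => hne.
have := strict_pref hscant w hne; rewrite /fS.
have hh1 := SBR_supp hmu hSBR hw (mw w).
have hh2 := SBR_supp hmu hSBR (mw_pos w) m.
rewrite (val_used _ hw) (val_used _ (mw_pos w)) in hh1 hh2.
have e : uS (alpha m) w = uS (alpha (mw w)) w by apply/le_anti; rewrite hh1 hh2.
by rewrite e eqxx.
Qed.

Lemma f_best w w' : uS (fS w') w <= uS (fS w) w.
Proof.
have := SBR_supp hmu hSBR (mw_pos w) (mw w').
by rewrite (val_used _ (mw_pos w')) (val_used _ (mw_pos w)).
Qed.

Definition gS (m : M) : A :=
  if (emb hAM (einv a0 hAM m) == m) && [exists w, fS w == einv a0 hAM m]
  then einv a0 hAM m else fS w0.

Lemma gS_img m : exists w, gS m = fS w.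
Proof.
rewrite /gS; case: ifP => [/andP[_ /existsP[w /eqP <-]]|_]; by eauto.
Qed.

Lemma gS_emb w : gS (emb hAM (fS w)) = fS w.
Proof.
rewrite /gS einvK eqxx /=.
by have -> : [exists w', fS w' == fS w] by apply/existsP; exists w.
Qed.

Definition sighat (w : Om) (m : M) : R := (m == emb hAM (fS w))%:R.
Definition rhohat (m : M) (c : A) : R := (c == gS m)%:R.

Lemma ind_dist (T : finType) (t : T) : is_dist (fun x => (x == t)%:R : R).
Proof.
split; first by move=> x; rewrite ler0n.
by rewrite (bigD1 t) //= eqxx big1 ?addr0 // => x /negbTE ->.
Qed.

Lemma val_hat (u : A -> Om -> R) m w : mval rhohat u m w = u (gS m) w.
Proof.
rewrite /mval /rhohat (bigD1 (gS m)) //= eqxx mul1r big1 ?addr0 // => c /negbTE ->.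
by rewrite mul0r.
Qed.

Lemma U_hat (u : A -> Om -> R) : U mu0 u sighat rhohat = \sum_w mu0 w * u (fS w) w.
Proof.
rewrite U_eq1; apply: eq_bigr => w _; congr (_ * _).
under eq_bigr do rewrite val_hat.
rewrite (bigD1 (emb hAM (fS w))) //= /sighat eqxx mul1r gS_emb big1 ?addr0 //.
by move=> m /negbTE ->; rewrite mul0r.
Qed.

Lemma decomp m w :
  mu0 w * (m == emb hAM (fS w))%:R = \sum_m' (m == emb hAM (alpha m'))%:R * q m' w.
Proof.
have -> : \sum_m' (m == emb hAM (alpha m'))%:R * q m' w =
          \sum_m' (m == emb hAM (fS w))%:R * q m' w.
  apply: eq_bigr => m' _.
  have [h0|hp] := eqVneq (sigma w m') 0; first by rewrite /q /qv h0 !mulr0.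
  have hpos : 0 < sigma w m' by rewrite lt_def hp (hs w).1.
  by rewrite (f_cons hpos).
by rewrite -mulr_sumr /q /qv -mulr_sumr (hs w).2 mulr1 mulrC.
Qed.

Lemma final_profile :
  exists (sg : Om -> M -> R) (rh : M -> A -> R),
    [/\ partitional sg, pure_strat rh, cheap_talk_eq mu0 uS uR sg rh,
        U mu0 uS sg rh = V & (#|used_msgs sg| <= #|A|)%N].
Proof.
have hsh : msg_strat sighat by move=> w; exact: ind_dist.
have hrh : act_strat rhohat by move=> m; exact: ind_dist.
exists sighat, rhohat; split.
- by move=> w; exists (emb hAM (fS w)); rewrite /sighat eqxx.
- by move=> m; exists (gS m) => c.
- split.
    split => // sg' hsg'; rewrite U_eq1 U_hat; apply: ler_sum => w _.
    rewrite ler_pM2l //.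
    apply: (@le_trans _ _ (\sum_m sg' w m * uS (fS w) w)).
      apply: ler_sum => m _; rewrite val_hat; apply: ler_wpM2l; first exact: (hsg' w).1.
      by have [w' ->] := gS_img m; exact: f_best.
    by rewrite -mulr_suml (hsg' w).2 mul1r.
  apply: SO_RBR => // m c; rewrite /rhohat; case: eqP => [-> _ d|]; last by rewrite ltxx.
  have hd : forall u : A -> Om -> R, forall e, dot (qv mu0 sighat m) (u e) =
      \sum_m' (m == emb hAM (alpha m'))%:R * dot (q m') (u e).
    move=> u e; rewrite /dot /qv /sighat.
    under eq_bigr do rewrite decomp mulr_suml.
    rewrite exchange_big; apply: eq_bigr => m' _ /=.
    by rewrite mulr_sumr; apply: eq_bigr => w _; rewrite mulrA.
  rewrite !hd; apply: ler_sum => m' _.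
  case: eqP => hm; last by rewrite !mul0r.
  rewrite !mul1r.
  case: (pickP (fun w => 0 < sigma w m')) => [w hw|hno].
    rewrite hm (f_cons hw) gS_emb -(f_cons hw).
    exact: RBR_supp hRBR (alpha_pos m') d.
  have hq0 : forall w, q m' w = 0.
    move=> w; rewrite /q /qv.
    have -> : sigma w m' = 0 by apply/eqP; rewrite eq_le (hs w).1 andbT leNgt hno.
    by rewrite mulr0.
  by rewrite /dot !big1 // => w _; rewrite hq0 mul0r.
- rewrite U_hat -hV U_eq1; apply: eq_bigr => w _; congr (_ * _).
  have -> : \sum_m sigma w m * mval rho uS m w = \sum_m sigma w m * uS (fS w) w.
    apply: eq_bigr => m _.
    have [h0|hp] := eqVneq (sigma w m) 0; first by rewrite h0 !mul0r.
    have hpos : 0 < sigma w m by rewrite lt_def hp (hs w).1.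
    by rewrite (val_used _ hpos) (f_cons hpos).
  by rewrite -mulr_suml (hs w).2 mul1r.
- apply: (@leq_trans #|[set emb hAM x | x in A]|); last exact: leq_imset_card.
  apply: subset_leq_card; apply/fintype.subsetP => m; rewrite inE => /existsP[w].
  rewrite /sighat; case: eqP => [-> _|]; last by rewrite ltxx.
  by apply/imsetP; exists (fS w).
Qed.

End Steps.

From mathcomp Require Import topology normedtype derive.
Import numFieldNormedType.Exports.
Local Open Scope classical_set_scope.


Section Topo.
Variable R : realType.

Lemma cont_sum (T : topologicalType) (I : finType) (f : I -> T -> R) :
  (forall i, continuous (f i)) -> continuous (fun x => \sum_i f i x).
Proof.
move=> hf x; rewrite /index_enum; elim: (Finite.enum I) => [|i s IH].
  under eq_fun do rewrite big_nil.
  exact: cst_continuous.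
under eq_fun do rewrite big_cons.
exact: (continuousD (hf i x) IH).
Qed.

Lemma closed_le_fam (T : topologicalType) (I : Type) (P : I -> Prop)
  (f g : I -> T -> R) :
  (forall i, continuous (f i)) -> (forall i, continuous (g i)) ->
  closed [set v | forall i, P i -> f i v <= g i v].
Proof.
move=> hf hg.
have -> : [set v | forall i, P i -> f i v <= g i v] =
  \bigcap_(i in P) ((fun v => g i v - f i v) @^-1` [set x | 0 <= x]).
  apply/seteqP; split => v /= h i hi.
    by rewrite /= subr_ge0; apply: h.
  by have := h i hi; rewrite /= subr_ge0.
apply: closed_bigI => i _.
apply: preimage_closed; last exact: closed_ge.
move=> v _; apply: continuousB; [exact: hg | exact: hf].
Qed.

End Topo.

Lemma exists_max (R : realType) (I : finType) (i0 : I) (f : I -> R) :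
  exists i, forall j, f j <= f i.
Proof.
suff : forall s : seq I, exists i, forall j, j \in s -> f j <= f i.
  by case/(_ (enum I)) => i hi; exists i => j; apply: hi; rewrite mem_enum.
elim => [|x s [i hi]]; first by exists i0.
case: (leP (f x) (f i)) => hx.
  by exists i => j; rewrite in_cons => /orP[/eqP ->|]; [|apply: hi].
exists x => j; rewrite in_cons => /orP[/eqP ->|/hi h]; first exact: lexx.
exact: (le_trans h (ltW hx)).
Qed.

Section Att.
Variables (R : realType) (A Om M : finType) (mu0 : Om -> R) (uS uR : A -> Om -> R).
Variables (a0 : A) (m0 : M).
Hypothesis hmu : forall w, 0 < mu0 w.

Lemma ind_dist' (T : finType) (t : T) : is_dist (fun x => (x == t)%:R : R).
Proof.
split; first by move=> x; rewrite ler0n.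
by rewrite (bigD1 t) //= eqxx big1 ?addr0 // => x /negbTE ->.
Qed.

Lemma babbling : exists (sigma : Om -> M -> R) (rho : M -> A -> R),
  cheap_talk_eq mu0 uS uR sigma rho.
Proof.
have [astar hmax] := exists_max a0 (fun a => \sum_w mu0 w * uR a w).
pose sg (w : Om) (m : M) := (m == m0)%:R : R.
pose rh (m : M) (c : A) := (c == astar)%:R : R.
have hs : msg_strat sg by move=> w; exact: ind_dist'.
have hr : act_strat rh by move=> m; exact: ind_dist'.
have hval : forall m w, mval rh uS m w = uS astar w.
  move=> m w; rewrite /mval /rh (bigD1 astar) //= eqxx mul1r big1 ?addr0 // => c /negbTE ->.
  by rewrite mul0r.
exists sg, rh; split.
  have hU : forall s, msg_strat s -> U mu0 uS s rh = \sum_w mu0 w * uS astar w.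
    move=> s hs'; rewrite U_eq1; apply: eq_bigr => w _; congr (_ * _).
    under eq_bigr do rewrite hval.
    by rewrite -mulr_suml (hs' w).2 mul1r.
  by split => // sg' hsg'; rewrite !hU.
apply: SO_RBR => // m c; rewrite /rh; case: eqP => [-> _ d|]; last by rewrite ltxx.
rewrite /dot /qv /sg; case: eqP => _.
  under eq_bigr do rewrite mulr1.
  under [X in _ <= X]eq_bigr do rewrite mulr1.
  exact: hmax.
by rewrite !big1 // => w _; rewrite mulr0 mul0r.
Qed.


Let n1 := #|{: Om * M}|.
Let n2 := #|{: M * A}|.

Definition sig_of (v : 'rV[R]_(n1 + n2)) (w : Om) (m : M) : R :=
  v ord0 (lshift n2 (enum_rank (w, m))).
Definition rho_of (v : 'rV[R]_(n1 + n2)) (m : M) (a : A) : R :=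
  v ord0 (rshift n1 (enum_rank (m, a))).
Definition enc (sigma : Om -> M -> R) (rho : M -> A -> R) : 'rV[R]_(n1 + n2) :=
  \row_i match split i with
         | inl j => sigma (enum_val j).1 (enum_val j).2
         | inr j => rho (enum_val j).1 (enum_val j).2 end.

Lemma sig_enc sigma rho : sig_of (enc sigma rho) = sigma.
Proof.
apply: funext => w; apply: funext => m.
by rewrite /sig_of /enc mxE (unsplitK (inl _ _)) enum_rankK.
Qed.

Lemma rho_enc sigma rho : rho_of (enc sigma rho) = rho.
Proof.
apply: funext => m; apply: funext => a.
by rewrite /rho_of /enc mxE (unsplitK (inr _ _)) enum_rankK.
Qed.

Lemma cont_sig w m : continuous (fun v : 'rV[R]_(n1 + n2) => sig_of v w m).
Proof. exact: coord_continuous. Qed.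
Lemma cont_rho m a : continuous (fun v : 'rV[R]_(n1 + n2) => rho_of v m a).
Proof. exact: coord_continuous. Qed.

Lemma cont_U (T : topologicalType) (u : A -> Om -> R) (s : T -> Om -> M -> R)
  (r : T -> M -> A -> R) :
  (forall w m, continuous (fun t => s t w m)) -> (forall m a, continuous (fun t => r t m a)) ->
  continuous (fun t => U mu0 u (s t) (r t)).
Proof.
move=> hs hr; rewrite /U.
apply: cont_sum => w; apply: cont_sum => m; apply: cont_sum => a.
move=> x.
apply: (@continuousM _ _ (fun t => mu0 w * s t w m * r t m a) (fun _ => u a w));
  last exact: cst_continuous.
apply: (@continuousM _ _ (fun t => mu0 w * s t w m) (fun t => r t m a)); last exact: hr.
apply: (@continuousM _ _ (fun _ => mu0 w) (fun t => s t w m)); first exact: cst_continuous.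
exact: hs.
Qed.


Let T := 'rV[R]_(n1 + n2).
Let K : set T := [set v | cheap_talk_eq mu0 uS uR (sig_of v) (rho_of v)].

Lemma cont_sumsig w : continuous (fun v : T => \sum_m sig_of v w m).
Proof. by apply: cont_sum => m; exact: cont_sig. Qed.
Lemma cont_sumrho m : continuous (fun v : T => \sum_a rho_of v m a).
Proof. by apply: cont_sum => a; exact: cont_rho. Qed.

Lemma closedK : closed K.
Proof.
pose K1 := [set v : T | forall i : Om * M, True -> (fun _ : T => 0) v <= sig_of v i.1 i.2].
pose K2 := [set v : T | forall w : Om, True -> \sum_m sig_of v w m <= (fun _ : T => 1) v].
pose K3 := [set v : T | forall w : Om, True -> (fun _ : T => 1) v <= \sum_m sig_of v w m].
pose K4 := [set v : T | forall i : M * A, True -> (fun _ : T => 0) v <= rho_of v i.1 i.2].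
pose K5 := [set v : T | forall m : M, True -> \sum_a rho_of v m a <= (fun _ : T => 1) v].
pose K6 := [set v : T | forall m : M, True -> (fun _ : T => 1) v <= \sum_a rho_of v m a].
pose K7 := [set v : T | forall s : Om -> M -> R, msg_strat s ->
   U mu0 uS s (rho_of v) <= U mu0 uS (sig_of v) (rho_of v)].
pose K8 := [set v : T | forall r : M -> A -> R, act_strat r ->
   U mu0 uR (sig_of v) r <= U mu0 uR (sig_of v) (rho_of v)].
have -> : K = K1 `&` K2 `&` K3 `&` K4 `&` K5 `&` K6 `&` K7 `&` K8.
  apply/seteqP; split => v.
    move=> [[hs hr hsb] [_ _ hrb]].
    split; [split; [split; [split; [split; [split; [split|]|]|]|]|]|] => //=.
    - by case=> w m _; exact: (hs w).1.
    - by move=> w _; rewrite (hs w).2.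
    - by move=> w _; rewrite (hs w).2.
    - by case=> m a _; exact: (hr m).1.
    - by move=> m _; rewrite (hr m).2.
    - by move=> m _; rewrite (hr m).2.
  move=> [[[[[[[h1 h2] h3] h4] h5] h6] h7] h8].
  have hs : msg_strat (sig_of v).
    move=> w; split; first by move=> m; exact: (h1 (w, m) I).
    by apply/eqP; rewrite eq_le h2 // h3.
  have hr : act_strat (rho_of v).
    move=> m; split; first by move=> a; exact: (h4 (m, a) I).
    by apply/eqP; rewrite eq_le h5 // h6.
  by split; split.
repeat apply: closedI.
- apply: closed_le_fam => [i|i]; [exact: cst_continuous | exact: cont_sig].
- apply: closed_le_fam => [i|i]; [exact: cont_sumsig | exact: cst_continuous].
- apply: closed_le_fam => [i|i]; [exact: cst_continuous | exact: cont_sumsig].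
- apply: closed_le_fam => [i|i]; [exact: cst_continuous | exact: cont_rho].
- apply: closed_le_fam => [i|i]; [exact: cont_sumrho | exact: cst_continuous].
- apply: closed_le_fam => [i|i]; [exact: cst_continuous | exact: cont_sumrho].
- apply: (@closed_le_fam R T _ _ (fun s v => U mu0 uS s (rho_of v))
                            (fun _ v => U mu0 uS (sig_of v) (rho_of v))) => s.
    by apply: cont_U => [w m|m a]; [exact: cst_continuous | exact: cont_rho].
  by apply: cont_U => [w m|m a]; [exact: cont_sig | exact: cont_rho].
- apply: (@closed_le_fam R T _ _ (fun r v => U mu0 uR (sig_of v) r)
                            (fun _ v => U mu0 uR (sig_of v) (rho_of v))) => r.
    by apply: cont_U => [w m|m a]; [exact: cont_sig | exact: cst_continuous].
  by apply: cont_U => [w m|m a]; [exact: cont_sig | exact: cont_rho].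
Qed.


Lemma compactK : compact K.
Proof.
pose B := [set v : T | forall i, `[(0:R), 1]%classic (v ord0 i)].
have cB : compact B.
  by apply: (@rV_compact _ _ (fun=> `[(0:R), 1]%classic)) => i; exact: segment_compact.
apply: (@subclosed_compact _ K B closedK cB).
move=> v [[hs hr _] _] i /=; rewrite in_itv /=.
case: (split_ordP i) => j ->.
  have -> : v ord0 (lshift n2 j) = sig_of v (enum_val j).1 (enum_val j).2.
    by rewrite /sig_of -surjective_pairing enum_valK.
  by rewrite (hs _).1 dist_le1.
have -> : v ord0 (rshift n1 j) = rho_of v (enum_val j).1 (enum_val j).2.
  by rewrite /rho_of -surjective_pairing enum_valK.
by rewrite (hr _).1 dist_le1.
Qed.

Lemma attain : exists (sigma : Om -> M -> R) (rho : M -> A -> R),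
  cheap_talk_eq mu0 uS uR sigma rho /\
  forall (sigma' : Om -> M -> R) (rho' : M -> A -> R), cheap_talk_eq mu0 uS uR sigma' rho' ->
    U mu0 uS sigma' rho' <= U mu0 uS sigma rho.
Proof.
have [sb [rb hb]] := babbling.
have K0 : K !=set0 by exists (enc sb rb); rewrite /K /= sig_enc rho_enc.
have cf : continuous (fun v : T => U mu0 uS (sig_of v) (rho_of v)).
  by apply: cont_U => [w m|m a]; [exact: cont_sig | exact: cont_rho].
have [c hc hmax] := compact_EVT_max K0 compactK (@continuous_subspaceT _ _ K _ cf).
rewrite in_setE in hc.
exists (sig_of c), (rho_of c); split => // s r hsr.
have := hmax (enc s r); rewrite sig_enc rho_enc; apply.
by rewrite in_setE /K /= sig_enc rho_enc.
Qed.

End Att.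


Lemma U_le1 (R : realType) (A Om M : finType) (mu0 : Om -> R) (u : A -> Om -> R)
  (sigma : Om -> M -> R) (rho : M -> A -> R) :
  (forall w, 0 < mu0 w) -> \sum_w mu0 w = 1 -> (forall a w, 0 <= u a w <= 1) ->
  msg_strat sigma -> act_strat rho -> U mu0 u sigma rho <= 1.
Proof.
move=> hmu hsum hu hs hr; rewrite U_eq1 -hsum; apply: ler_sum => w _.
rewrite -[X in _ <= X]mulr1 ler_pM2l //.
rewrite -(hs w).2; apply: ler_sum => m _.
rewrite -[X in _ <= X]mulr1; apply: ler_wpM2l; first exact: (hs w).1.
rewrite -(hr m).2; apply: ler_sum => a _.
rewrite -[X in _ <= X]mulr1; apply: ler_wpM2l; first exact: (hr m).1.
by case/andP: (hu a w).
Qed.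

Unset Implicit Arguments.

Theorem proposition1 (R : realType) (A Om M : finType)
  (hA : (0 < #|A|)%N) (hOm : (0 < #|Om|)%N)
  (hM : (maxn #|Om| #|A| < #|M|)%N)
  (mu0 : Om -> R) (hmu_pos : forall w, 0 < mu0 w) (hmu_sum : \sum_(w : Om) mu0 w = 1)
  (uS uR : A -> Om -> R)
  (huS : forall a w, 0 <= uS a w <= 1) (huR : forall a w, 0 <= uR a w <= 1)
  (hscant : scant_indifferences uS uR)
  (hnovalue : persuasion_payoff M mu0 uS uR = cheap_talk_payoff M mu0 uS uR) :
  exists (sigma : Om -> M -> R) (rho : M -> A -> R),
    [/\ partitional sigma, pure_strat rho, cheap_talk_eq mu0 uS uR sigma rho,
        U mu0 uS sigma rho = persuasion_payoff M mu0 uS uR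
      & (#|used_msgs sigma| <= #|A|)%N].
Proof.
have /card_gt0P [a0 _] := hA.
have /card_gt0P [w0 _] := hOm.
have hAM : (#|A| <= #|M|)%N.
  by apply: ltnW; apply: leq_ltn_trans hM; rewrite leq_maxr.
have /card_gt0P [m0 _] : (0 < #|M|)%N by apply: leq_trans hAM.
have [sg [rh [hct hmax]]] := attain mu0 uS uR a0 m0.
set V := persuasion_payoff M mu0 uS uR.
set P := [set x : R | exists (sigma : Om -> M -> R) (rho : M -> A -> R),
                     R_BR mu0 uR sigma rho /\ x = U mu0 uS sigma rho].
have hP : has_sup P.
  split; first by exists (U mu0 uS sg rh); exists sg, rh; split => //; case: hct.
  exists 1 => x [s [r [[hs hr _] ->]]].
  exact: U_le1.
have UB : forall (sigma : Om -> M -> R) (rho : M -> A -> R),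
    R_BR mu0 uR sigma rho -> U mu0 uS sigma rho <= V.
  move=> s r hsr; apply: sup_upper_bound => //; by exists s, r.
set C := [set x : R | exists (sigma : Om -> M -> R) (rho : M -> A -> R),
                     cheap_talk_eq mu0 uS uR sigma rho /\ x = U mu0 uS sigma rho].
have hC : sup C = U mu0 uS sg rh.
  have C0 : C !=set0 by exists (U mu0 uS sg rh), sg, rh.
  have ub : ubound C (U mu0 uS sg rh) by move=> x [s [r [hsr ->]]]; exact: hmax.
  apply/eqP; rewrite eq_le ge_sup //=.
  by apply: sup_upper_bound; [split => //; exists (U mu0 uS sg rh) | exists sg, rh].
have hV : U mu0 uS sg rh = V by rewrite /V hnovalue -hC.
exact: (final_profile a0 hAM hmu_pos huR hscant UB hct hV w0).
Qed.
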